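(* Let $X$ be a compact metrizable space and let $\Delta$ be a set of Borel probability measures on $X$. The following are equivalent: (1) for any closed $V$ and open $U$ with $V\subseteq U$, there is a closed set $V'$ with $V\subseteq V'\subseteq U$ and $\mu(\partial V')=0$ for all $\mu\in\Delta$; (2) for any closed $V$ and open $U$ with $V\subseteq U$, there is an open set $V'$ with $V\subseteq V'\subseteq U$ and $\mu(\partial V')=0$ for all $\mu\in\Delta$; (3) for any $x\in X$ and any open $U\ni x$, there is a closed neighbourhood $V\subseteq U$ of $x$ with $\mu(\partial V)=0$ for all $\mu\in\Delta$; (4) for any $x\in X$ and any open $U\ni x$, there is an open neighbourhood $V\subseteq U$ of $x$ with $\mu(\partial V)=0$ for all $\mu\in\Delta$. *)

(* Defs.v *)
From HB Require Import structures.
From mathcomp Require Import all_boot all_order all_algebra.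
From mathcomp Require Import all_classical all_reals all_analysis.
Set Implicit Arguments. Unset Strict Implicit. Unset Printing Implicit Defensive.
Import Order.TTheory GRing.Theory Num.Theory.
Local Open Scope classical_set_scope.
Local Open Scope ring_scope.

Definition boundary {T : topologicalType} (A : set T) : set T :=
  closure A `\` interior A.

Definition borel_of (T : ptopologicalType) := g_sigma_algebraType (@open T).

(* Main.v *)
Require Import Defs.
From HB Require Import structures.
From mathcomp Require Import all_boot all_order all_algebra.
From mathcomp Require Import all_classical all_reals all_analysis.
Import Order.TTheory GRing.Theory Num.Theory.
Local Open Scope classical_set_scope.
Local Open Scope ring_scope.

Set Implicit Arguments.
Section Helpers.
Variable (R : realType) (X : pseudoPMetricType R).

Lemma closed_meas (A : set X) : closed A -> measurable (A : set (borel_of X)).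
Proof.
move=> cA; rewrite -(setCK A); apply: measurableC.
by apply: sub_sigma_algebra; exact: closed_openC.
Qed.

Lemma bd_closed (A : set X) : closed (boundary A).
Proof.
rewrite /boundary setDE; apply: closedI; first exact: closed_closure.
by rewrite closedC; exact: open_interior.
Qed.

Lemma bd_meas (A : set X) : measurable (boundary A : set (borel_of X)).
Proof. apply: closed_meas; exact: bd_closed. Qed.

Lemma null_sub (mu : probability (borel_of X) R) (A B : set X) :
  boundary A `<=` boundary B -> mu (boundary B) = 0%E -> mu (boundary A) = 0%E.
Proof.
move=> AB h; apply/le_anti; rewrite measure_ge0 andbT -h.
by apply: le_measure => //; rewrite inE; exact: bd_meas.
Qed.

Lemma bd_closure (A : set X) : boundary (closure A) `<=` boundary A.
Proof.
move=> x [h1 h2]; split.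
  by rewrite -(closure_id _).1 in h1 => //; exact: closed_closure.
by move=> h; apply: h2; apply: interiorS h; exact: subset_closure.
Qed.

Lemma bd_interior (A : set X) : boundary (A°) `<=` boundary A.
Proof.
move=> x [h1 h2]; split.
  by apply: closureS h1; exact: interior_subset.
by rewrite (interior_id _).1 in h2 => //; exact: open_interior.
Qed.

Lemma bd_setC (A : set X) : boundary (~` A) `<=` boundary A.
Proof.
have e : closure (~` A) = ~` A°.
  apply: setC_inj; rewrite setCK -interiorC setCK //.
move=> x [h1 h2]; rewrite e in h1; rewrite interiorC in h2; split.
  exact: contrapT h2.
exact: h1.
Qed.

Lemma bd_setU (A B : set X) :
  boundary (A `|` B) `<=` boundary A `|` boundary B.
Proof.
move=> x [h1 h2]; rewrite closureU in h1.
case: h1 => h1; [left|right]; split => // h; apply: h2;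
  apply: interiorS h; [exact: subsetUl | exact: subsetUr].
Qed.

Lemma regularX (x : X) (U : set X) : open U -> U x ->
  exists W : set X, [/\ open W, W x & closure W `<=` U].
Proof.
move=> oU Ux.
have := @uniform_regular X x U; case.
  exact: open_nbhs_nbhs.
move=> V nV clV; exists V°; split.
- exact: open_interior.
- exact: nV.
- by apply: subset_trans clV; apply: closureS; exact: interior_subset.
Qed.

End Helpers.
Arguments regularX {R X x U}.
Arguments null_sub {R X mu A B}.
Arguments bd_meas {R X} A.
Arguments bd_setU {R X} A B.
Unset Implicit Arguments.

Theorem lemma2p1 (R : realType) (X : pseudoPMetricType R)
  (Xhaus : hausdorff_space X) (Xcpt : compact [set: X])
  (Delta : set (probability (borel_of X) R)) :
  [<->
   (* (1) *)
   (forall V U : set X, closed V -> open U -> V `<=` U ->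
      exists V' : set X, [/\ closed V', V `<=` V', V' `<=` U &
        forall mu, Delta mu -> mu (boundary V') = 0%E]);
   (* (2) *)
   (forall V U : set X, closed V -> open U -> V `<=` U ->
      exists V' : set X, [/\ open V', V `<=` V', V' `<=` U &
        forall mu, Delta mu -> mu (boundary V') = 0%E]);
   (* (3) *)
   (forall (x : X) (U : set X), open U -> U x ->
      exists V : set X, [/\ closed V, nbhs x V, V `<=` U &
        forall mu, Delta mu -> mu (boundary V) = 0%E]);
   (* (4) *)
   (forall (x : X) (U : set X), open U -> U x ->
      exists V : set X, [/\ open V, V x, V `<=` U &
        forall mu, Delta mu -> mu (boundary V) = 0%E])].
Proof.
tfae.
- move=> H1 V U cV oU VU.
  have [C [cC UC CV hC]] := H1 (~` U) (~` V) (open_closedC oU) (closed_openC cV)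
    (subsetC VU).
  exists (~` C); split.
  + exact: closed_openC.
  + by rewrite -(setCK V); apply: subsetC.
  + by rewrite -(setCK U); apply: subsetC.
  + by move=> mu Dmu; apply: null_sub (hC _ Dmu); exact: bd_setC.
- move=> H2 x U oU Ux.
  have [W [oW Wx clW]] := regularX oU Ux.
  have xW : [set x] `<=` W by move=> y ->.
  have [Q [oO xO OW hO]] := H2 [set x] W
    (accessible_closed_set1 (hausdorff_accessible Xhaus) (x:=x)) oW xW.
  exists (closure Q); split.
  + exact: closed_closure.
  + apply: filterS (@subset_closure _ Q) _.
    by apply: open_nbhs_nbhs; split => //; exact: xO.
  + by apply: subset_trans clW; exact: closureS.
  + by move=> mu Dmu; apply: null_sub (hO _ Dmu); exact: bd_closure.
- move=> H3 x U oU Ux.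
  have [V [cV nV VU hV]] := H3 x U oU Ux.
  exists V°; split.
  + exact: open_interior.
  + exact: nV.
  + by apply: subset_trans VU; exact: interior_subset.
  + by move=> mu Dmu; apply: null_sub (hV _ Dmu); exact: bd_interior.
- move=> H4 V U cV oU VU.
  pose G := fun Z : set X => [/\ open Z, closure Z `<=` U &
        forall mu, Delta mu -> mu (boundary Z) = 0%E].
  have G0 : G set0.
    split; first exact: open0.
    + by rewrite closure0.
    + move=> mu _; rewrite /boundary closure0 set0D; exact: measure0.
  have GU : forall A B, G A -> G B -> G (A `|` B).
    move=> A B [oA cA hA] [oB cB hB]; split.
    + exact: openU.
    + by rewrite closureU => y [/cA|/cB].
    + move=> mu Dmu; apply/le_anti; rewrite measure_ge0 andbT.
      have mA := bd_meas A; have mB := bd_meas B.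
      have mAB : measurable (boundary A `|` boundary B : set (borel_of X)).
        exact: measurableU.
      have := @le_measure _ _ _ mu (boundary (A `|` B)) (boundary A `|` boundary B).
      rewrite !inE => /(_ (bd_meas _) mAB (bd_setU A B)) le1.
      apply: (le_trans le1).
      apply: (le_trans (measureU2 _ _ _)); try exact: bd_meas.
      have e1 := hA mu Dmu; have e2 := hB mu Dmu.
      set a := (X in (X + _ <= _)%E); set b := (X in (_ + X <= _)%E).
      have -> : a = 0%E by exact: e1.
      have -> : b = 0%E by exact: e2.
      by rewrite adde0.

  have Gs : forall s : seq (set X), (forall i, i \in s -> G i) ->
      G (\bigcup_(i in [set i | i \in s]) i).
    elim=> [|a s IH] hs.
      have -> : \bigcup_(i in [set i | i \in [::]]) i = set0 :> set X.
        by apply/seteqP; split => y // [i].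
      exact: G0.
    have -> : \bigcup_(i in [set i | i \in a :: s]) i =
        a `|` \bigcup_(i in [set i | i \in s]) i.
      apply/seteqP; split => y.
        case=> i /=; rewrite inE => /orP [/eqP -> ay|iS iy]; first by left.
        by right; exists i.
      case=> [ay|[i /= iS iy]]; first by exists a => //=; rewrite inE eqxx.
      by exists i => //=; rewrite inE iS orbT.
    apply: GU; first by apply: hs; rewrite inE eqxx.
    by apply: IH => i iS; apply: hs; rewrite inE iS orbT.
  have cptV : compact V by apply: subclosed_compact Xcpt _.
  move: cptV; rewrite compact_cover => /(_ (set X) G id).
  case.
  + by move=> i [].
  + move=> x Vx.
    have [W [oW Wx clW]] := regularX oU (VU x Vx).
    have [Q [oO Ox OW hO]] := H4 x W oW Wx.
    exists Q => //; split => //.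
    by apply: subset_trans clW; exact: closureS.
  move=> D' D'G VD.
  have [oO clO hO] := Gs (finmap.enum_fset D') (fun i iD => set_mem (D'G i iD)).
  exists (closure (\bigcup_(i in [set i | i \in finmap.enum_fset D']) i)); split.
  + exact: closed_closure.
  + apply: subset_trans (@subset_closure _ _).
    move=> y /VD [i /= iD yi]; by exists i.
  + exact: clO.
  + by move=> mu Dmu; apply: null_sub (hO _ Dmu); exact: bd_closure.
Qed.
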